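(* Let $T$ be a tree of order $n$, and let $d_i$ denote the number of dominating sets of $T$ of size $i$. Then $$d_{\left\lceil\frac{n+2\Gamma(T)-2}{3}\right\rceil}\ge\cdots\ge d_{n-1}\ge d_n.$$
   Context: A dominating set of a graph $G=(V,E)$ is a set $S\subseteq V$ such that every vertex is in $S$ or adjacent to a vertex of $S$; it is minimal if no proper subset is dominating. $\Gamma(T)$ is the maximum size of a minimal dominating set of $T$. *)

(* Defs.v *)
From mathcomp Require Import all_boot.
Set Implicit Arguments. Unset Strict Implicit. Unset Printing Implicit Defensive.

Definition simple_graph (T : finType) (e : rel T) : Prop :=
  symmetric e /\ irreflexive e.

Definition edges (T : finType) (e : rel T) : {set {set T}} :=
  [set [set x; y] | x in T, y in T & e x y].

Definition is_tree (T : finType) (e : rel T) : Prop :=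
  [/\ simple_graph e, 0 < #|T|,
      (forall x y : T, connect e x y) & #|edges e| = #|T| - 1].

Definition dominating (T : finType) (e : rel T) (S : {set T}) : bool :=
  [forall v : T, (v \in S) || [exists u in S, e u v]].

Definition minimal_dominating (T : finType) (e : rel T) (S : {set T}) : bool :=
  dominating e S && [forall S' : {set T}, (S' \proper S) ==> ~~ dominating e S'].

Definition upper_domination (T : finType) (e : rel T) : nat :=
  \max_(S : {set T} | minimal_dominating e S) #|S|.

Definition num_dom (T : finType) (e : rel T) (i : nat) : nat :=
  #|[set S : {set T} | dominating e S & #|S| == i]|.

Definition ceil_div (a b : nat) : nat := (a + b.-1) %/ b.

(* Main.v *)
Require Import Defs.
From mathcomp Require Import all_boot.
From mathcomp Require Import zify.
Set Implicit Arguments. Unset Strict Implicit. Unset Printing Implicit Defensive.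

Section Tree.
Variables (T : finType) (e : rel T).
Hypothesis esym : symmetric e.
Hypothesis eirr : irreflexive e.

Fixpoint ball (r : T) (k : nat) : {set T} :=
  if k is k'.+1 then ball r k' :|: [set v | [exists u in ball r k', e u v]] else [set r].

Lemma ball_path r p x k : x \in ball r k -> path e x p -> last x p \in ball r (k + size p).
Proof.
elim: p x k => [|y p IH] x k /=; first by rewrite addn0.
move=> xk /andP[exy pp]. rewrite addnS -addSn. apply: IH pp.
rewrite /= in_setU; apply/orP; right; rewrite inE; apply/existsP; exists x; by rewrite xk exy.
Qed.

Lemma tree_bipartite : (forall x y, connect e x y) -> 0 < #|T| -> #|edges e| = #|T| - 1 ->
  exists c : T -> bool, forall u v, e u v -> c u != c v.
Proof.
move=> conn n0 ecard.
have [r _] : exists r : T, true by case/card_gt0P: n0 => r; exists r.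
have hc : forall v, exists k, v \in ball r k.
  move=> v; case/connectP: (conn r v) => p pp ->; exists (0 + size p); apply: ball_path pp; by rewrite /= set11.
pose d v := ex_minn (hc v).
have dP v : v \in ball r (d v) by rewrite /d; case: ex_minnP.
have dmin v k : v \in ball r k -> d v <= k by rewrite /d; case: ex_minnP => m _ H /H.
have edge_le u v : e u v -> d v <= (d u).+1.
  move=> euv; apply: dmin => /=; rewrite in_setU inE; apply/orP; right; apply/existsP; exists u; by rewrite dP euv.
have d0 v : (d v == 0) = (v == r).
  apply/idP/idP.
    by move/eqP=> h; have := dP v; rewrite h /= inE.
  move/eqP->; have := dmin r 0; rewrite /= inE eqxx => /(_ isT); by rewrite leqn0.
have par_ex v : v != r -> exists u, e u v && (d u == (d v).-1).
  rewrite -d0 => nz. have := dP v. case E: (d v) => [|k]; first by rewrite E in nz.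
  rewrite /= in_setU => /orP[]; first by move/dmin; rewrite E ltnn.
  rewrite inE => /existsP[u /andP[uk euv]]. exists u; rewrite euv /=. rewrite eqn_leq dmin //=.
  have := edge_le _ _ euv; rewrite E ltnS. done.
pose par v := odflt r [pick u | e u v && (d u == (d v).-1)].
have parP v : v != r -> e (par v) v && (d (par v) == (d v).-1).
  move=> nr; rewrite /par; case: pickP => [u //|H]. case: (par_ex v nr) => u; by rewrite H.
exists (fun v => odd (d v)) => u v euv; apply/negP => /eqP hodd.
have h1 := edge_le _ _ euv.
have h2 : d u <= (d v).+1 by apply: edge_le; rewrite esym.
have duv : d u = d v.
  case: (ltngtP (d u) (d v)) => // h.
  - have E : d v = (d u).+1 by lia.
    by rewrite E /= in hodd; case: (odd (d u)) hodd.
  - have E : d u = (d v).+1 by lia.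
    by rewrite E /= in hodd; case: (odd (d v)) hodd.
pose f v := [set v; par v].
have finj : {in [set~ r] &, injective f}.
  move=> x y; rewrite !in_setC1 => xr yr fxy.
  have := parP x xr; have := parP y yr. move=> /andP[_ /eqP dy] /andP[_ /eqP dx].
  have : x \in f y by rewrite -fxy !inE eqxx.
  rewrite !inE => /orP[/eqP // | /eqP xpy].
  have : y \in f x by rewrite fxy !inE eqxx.
  rewrite !inE => /orP[/eqP // | /eqP ypx].
  have := d0 x; rewrite (negbTE xr) => /negbT dx0.
  rewrite -xpy in dy; rewrite -ypx in dx. exfalso; move: dx0 dy dx; case: (d x) => [|a] //= _; case: (d y) => [|b] //=; lia.
have fE w : w != r -> f w \in edges e.
  move=> vr; apply/imset2P; exists (par w) w => //; last by rewrite /f setUC.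
  by rewrite inE; case/andP: (parP w vr).
have uvE : [set u; v] \in edges e.
  by apply/imset2P; exists u v => //; rewrite inE.
have uvN : [set u; v] \notin f @: [set~ r].
  apply/imsetP => [[w]]; rewrite in_setC1 => wr fw.
  case/andP: (parP w wr) => _ /eqP dw.
  have := d0 w; rewrite (negbTE wr) => /negbT dw0.
  have {}dw : d w = (d (par w)).+1 by rewrite dw prednK // lt0n.
  have uv : u != v by apply: contraTneq euv => ->; rewrite eirr.
  have : u \in f w by rewrite -fw !inE eqxx.
  have : v \in f w by rewrite -fw !inE eqxx orbT.
  rewrite !inE => /orP[/eqP vw|/eqP vw] /orP[/eqP uw|/eqP uw].
  - by move: uv; rewrite uw vw eqxx.
  - rewrite -uw in dw; rewrite vw in duv; lia.
  - rewrite -vw in dw; rewrite uw in duv; lia.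
  - by move: uv; rewrite uw vw eqxx.
have sub : [set u; v] |: (f @: [set~ r]) \subset edges e.
  apply/subsetP => x; rewrite in_setU1 => /orP[/eqP -> //|/imsetP[w]].
  by rewrite in_setC1 => wr ->; apply: fE.
have := subset_leq_card sub.
rewrite cardsU1 uvN (card_in_imset finj) cardsC1 ecard. lia.
Qed.

Definition indep (I : {set T}) := [forall u in I, forall v in I, ~~ e u v].

Lemma indep_le_Gamma I : indep I -> #|I| <= upper_domination e.
Proof.
move=> hI.
case: (arg_maxnP (fun M : {set T} => #|M|) hI) => M hM Mmax.
apply: leq_trans (Mmax I hI) _.
apply: leq_bigmax_cond.
have domM : dominating e M.
  apply/forallP => v; case vM: (v \in M) => //=; case: (boolP [exists u in M, e u v]) => // /exists_inPn H.
  have : indep (v |: M).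
    apply/forall_inP => x xM; apply/forall_inP => y yM.
    move: xM yM; rewrite !in_setU1 => /orP[/eqP->|xM] /orP[/eqP->|yM].
    - by rewrite eirr.
    - by rewrite esym; apply: H.
    - by apply: H.
    - by move/forall_inP: hM => /(_ x xM)/forall_inP/(_ y yM).
  move/Mmax; by rewrite cardsU1 vM /= ltnn.
apply/andP; split=> //; apply/forallP => S'; apply/implyP => /properP [sub [x xM xS']].
apply/negP => /forallP /(_ x); rewrite (negbTE xS') /= => /existsP [u /andP[uS' eux]].
move/forall_inP: hM => /(_ u (subsetP sub u uS'))/forall_inP/(_ x xM); by rewrite eux.
Qed.


Lemma big_indep (c : T -> bool) (Q Z : {set T}) : (forall u v, e u v -> c u != c v) -> Z \subset Q ->
  (forall z q, z \in Z -> q \in Q -> ~~ e z q) -> exists I, indep I /\ #|Q| + #|Z| <= 2 * #|I|.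
Proof.
move=> hc ZQ iso.
pose Qa := (Q :\: Z) :&: [set v | c v]. pose Qb := (Q :\: Z) :\: [set v | c v].
have hab : #|Qa| + #|Qb| = #|Q| - #|Z|.
  rewrite cardsID. have := cardsID Z Q. rewrite (setIidPr ZQ). lia.
have key : forall X : {set T}, X \subset Q :\: Z -> (forall x y, x \in X -> y \in X -> c x = c y) ->
    indep (Z :|: X) /\ #|Z :|: X| = #|Z| + #|X|.
  move=> X XQ hX; split.
    apply/forall_inP => x; rewrite in_setU => xZX; apply/forall_inP => y; rewrite in_setU => yZX.
    have yQ : y \in Q.
      case/orP: yZX => [yZ|yX]; first exact: (subsetP ZQ).
      by move: (subsetP XQ y yX); rewrite inE => /andP[].
    case/orP: xZX => [xZ|xX]; first exact: iso.
    case/orP: yZX => [yZ|yX].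
      by rewrite esym; apply: iso => //; move: (subsetP XQ x xX); rewrite inE => /andP[].
    by apply/negP => /hc; rewrite (hX x y xX yX) eqxx.
  rewrite cardsU. suff -> : Z :&: X = set0 by rewrite cards0 subn0.
  apply/setP => x; rewrite !inE; apply/negP => /andP[xZ xX].
  by move: (subsetP XQ x xX); rewrite inE xZ.
case: (leqP #|Qb| #|Qa|) => h.
- have hA : forall x y, x \in Qa -> y \in Qa -> c x = c y.
    by move=> x y; rewrite !inE => /andP[_ ->] /andP[_ ->].
  have [hi hc'] := key Qa (subsetIl _ _) hA.
  exists (Z :|: Qa); split => //. rewrite hc'. have := cardsID Z Q. rewrite (setIidPr ZQ). lia.
- have hB : forall x y, x \in Qb -> y \in Qb -> c x = c y.
    by move=> x y; rewrite !inE => /andP[/negbTE -> _] /andP[/negbTE -> _].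
  have [hi hc'] := key Qb (subsetDl _ _) hB.
  exists (Z :|: Qb); split => //. rewrite hc'. have := cardsID Z Q. rewrite (setIidPr ZQ). lia.
Qed.

Definition good (S : {set T}) := [set v | (v \in S) && dominating e (S :\ v)].

Lemma per_set (c : T -> bool) (S : {set T}) : (forall u v, e u v -> c u != c v) ->
  dominating e S -> #|S| + (#|S| - #|good S|) <= 2 * upper_domination e.
Proof.
move=> hc Sdom.
pose P := [set w | (w \notin S) && (#|[set u in S | e u w]| == 1)].
pose Z := [set v in S | [forall q in S :|: P, ~~ e v q]].
pose Y := [set v in S | [exists w in P, e v w]].
have s1 : S :\: good S \subset Z :|: Y.
  apply/subsetP => v /setDP [vS vG].
  have nd : ~~ dominating e (S :\ v) by move: vG; rewrite inE vS.
  case/forallPn: nd => x. rewrite negb_or => /andP [xSv /exists_inPn nx].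
  rewrite in_setU; case/boolP: ([exists w in P, e v w]) => hY.
    by apply/orP; right; rewrite inE vS hY.
  apply/orP; left.
  case: (eqVneq x v) => [xv | xnv].
  - subst x. rewrite inE vS /=. apply/forall_inP => q; rewrite in_setU => /orP[qS|qP].
    + rewrite esym. case: (eqVneq q v) => [->|qv]; first by rewrite eirr.
      by apply: nx; rewrite !inE qv qS.
    + by move/exists_inPn: hY => /(_ q qP).
  - exfalso.
    have xS : x \notin S by move: xSv; rewrite !inE xnv.
    have [u uS eux] : exists2 u, u \in S & e u x.
      by move/forallP: Sdom => /(_ x); rewrite (negbTE xS) /= => /exists_inP[u uS eux]; exists u.
    have uv : u = v.
      apply: contraTeq eux => uv. apply: nx. by rewrite !inE uv uS.
    subst u.
    have xP : x \in P.
      rewrite inE xS /=. apply/eqP. rewrite (_ : [set u in S | e u x] = [set v]) ?cards1 //.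
      apply/setP => u; rewrite !inE. case: (eqVneq u v) => [->|uv]; first by rewrite uS eux.
      by apply/negbTE/negP => /andP[uS' eux']; move: (nx u); rewrite !inE uv uS' eux' => /(_ isT).
    by move/exists_inPn: hY => /(_ x xP); rewrite eux.
pose h w := odflt w [pick u in S | e u w].
have YP : #|Y| <= #|P|.
  apply: leq_trans (leq_imset_card h P). apply: subset_leq_card.
  apply/subsetP => v; rewrite inE => /andP[vS /exists_inP[w wP evw]].
  apply/imsetP; exists w => //. rewrite /h.
  move: (wP); rewrite inE => /andP[_ /cards1P[z hz]].
  have : v \in [set u in S | e u w] by rewrite inE vS evw.
  rewrite hz inE => /eqP ->. case: pickP => [y hy|].
    have : y \in [set u in S | e u w] by rewrite inE.
    by rewrite hz inE => /eqP->.
  move=> /(_ z). have : z \in [set u in S | e u w] by rewrite hz set11.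
  by rewrite inE => ->.
have SP : #|S :|: P| = #|S| + #|P|.
  rewrite cardsU. suff -> : S :&: P = set0 by rewrite cards0 subn0.
  apply/setP => x; rewrite !inE; apply/negP => /and3P[xS xS' _]. by rewrite xS in xS'.
have ZQ : Z \subset S :|: P.
  by apply/subsetP => x; rewrite inE in_setU => /andP[-> _].
have iso : forall z q, z \in Z -> q \in S :|: P -> ~~ e z q.
  by move=> z q; rewrite inE => /andP[_ /forall_inP H] /H.
have [I [hI hIc]] := big_indep hc ZQ iso.
have := indep_le_Gamma hI.
have gS : good S \subset S by apply/subsetP => x; rewrite inE => /andP[].
have : #|S :\: good S| <= #|Z| + #|Y|.
  apply: leq_trans (subset_leq_card s1) _. rewrite cardsU. lia.
have := cardsID (good S) S. rewrite (setIidPr gS).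
lia.
Qed.

End Tree.


Lemma exch (X Y : finType) (A : {set X}) (F : X -> {set Y}) :
  \sum_(x in A) #|F x| = \sum_y #|[set x in A | y \in F x]|.
Proof.
transitivity (\sum_(x in A) \sum_y ((y \in F x) : nat)).
  apply: eq_bigr => x _. rewrite -sum1_card big_mkcond /=. apply: eq_bigr => y _. by case: (y \in F x).
rewrite exchange_big /=. apply: eq_bigr => y _. rewrite -sum1_card big_mkcond /= [RHS]big_mkcond /=.
apply: eq_bigr => x _; rewrite inE; by case: (x \in A); case: (y \in F x).
Qed.

Theorem theorem4p11 (T : finType) (e : rel T) :
  is_tree e ->
  forall i : nat,
    ceil_div (#|T| + 2 * upper_domination e - 2) 3 <= i -> i < #|T| ->
    num_dom e i.+1 <= num_dom e i.
Proof.
case=> [[esym eirr] n0 conn ecard] i hi hin.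
have [c hc] := tree_bipartite esym eirr conn n0 ecard.
pose D k := [set S : {set T} | dominating e S & #|S| == k].
have nd k : num_dom e k = #|D k| by [].
rewrite !nd.
set m := #|T| - i.
have m0 : 0 < m by rewrite subn_gt0.
rewrite -(leq_pmul2r m0).
have L1 : #|D i.+1| * m <= \sum_(S in D i.+1) #|good e S|.
  rewrite -sum_nat_const. apply: leq_sum => S; rewrite inE => /andP[Sdom /eqP Sc].
  have := per_set esym eirr hc Sdom.
  have : #|good e S| <= #|S|.
    by apply: subset_leq_card; apply/subsetP => x; rewrite inE => /andP[].
  move: hi; rewrite /ceil_div /= Sc /m. rewrite -ltnS ltn_divLR //. move: (upper_domination e) (#|good e S|) (#|T|) => G g n. lia.
apply: leq_trans L1 _.
rewrite exch.
have L4 : \sum_(S in D i) #|~: S| = #|D i| * m.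
  rewrite -sum_nat_const. apply: eq_bigr => S; rewrite inE => /andP[_ /eqP Sc].
  have := cardsC S. rewrite Sc /m. lia.
rewrite -L4 exch.
apply: leq_sum => v _.
rewrite -(@card_in_imset _ _ (fun S => S :\ v)).
  apply: subset_leq_card. apply/subsetP => _ /imsetP[S hS ->]; move: hS; rewrite !inE => /andP[/andP[Sdom /eqP Sc] /andP[vS dSv]].
  rewrite dSv eqxx /= andbT. have := cardsD1 v S; rewrite vS Sc. lia.
move=> S1 S2; rewrite !inE => /andP[_ /andP[v1 _]] /andP[_ /andP[v2 _]] h.
by rewrite -(setD1K v1) h setD1K.
Qed.
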